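(* Let $p\in\mathbb Z\{x_1,\dots,x_m\}$ be a polynomial identity of the ring $M_n(\mathbb Z)$. Write $p=f-g$ where $f\in\mathbb N\{x_1,\dots,x_m\}$ is the sum of the terms of $p$ with positive coefficient and $g\in\mathbb N\{x_1,\dots,x_m\}$ is the negative of the sum of the terms of $p$ with negative coefficient. Then $(f,g)$ is a semiring$^\dagger$ polynomial identity of $M_n(R)$ for every commutative semiring$^\dagger$ $R$.
   Context: A semiring$^\dagger$ $(R,+,\cdot,1)$ is a set with binary operations such that $(R,+)$ is an abelian semigroup, $(R,\cdot,1)$ is a monoid, and multiplication distributes over addition (no zero element required). $\mathbb Z\{x_1,\dots,x_m\}$ (resp. $\mathbb N\{x_1,\dots,x_m\}$) is the free associative algebra (resp. free $\mathbb N$-semiring$^\dagger$, the monoid semiring over $\mathbb N$ of the free word monoid) on noncommuting indeterminates. $p$ is a polynomial identity of a ring $S$ if $p(r_1,\dots,r_m)=0$ for all $r_i\in S$. A pair $(f,g)$ is a semiring$^\dagger$ polynomial identity of a semiring$^\dagger$ $S$ if $f(r_1,\dots,r_m)=g(r_1,\dots,r_m)$ for all $r_i\in S$. $M_n(R)$ denotes $n\times n$ matrices with the usual operations. *)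

(* Defs.v *)
From HB Require Import structures.
From mathcomp Require Import all_boot all_order all_algebra.
Set Implicit Arguments. Unset Strict Implicit. Unset Printing Implicit Defensive.
Import Order.TTheory GRing.Theory Num.Theory.

Record comSemiringD := ComSemiringD {
  sr_car :> Type;
  sr_add : sr_car -> sr_car -> sr_car;
  sr_mul : sr_car -> sr_car -> sr_car;
  sr_one : sr_car;
  sr_addA : forall x y z, sr_add x (sr_add y z) = sr_add (sr_add x y) z;
  sr_addC : forall x y, sr_add x y = sr_add y x;
  sr_mulA : forall x y z, sr_mul x (sr_mul y z) = sr_mul (sr_mul x y) z;
  sr_mulC : forall x y, sr_mul x y = sr_mul y x;
  sr_mul1l : forall x, sr_mul sr_one x = x;
  sr_mul1r : forall x, sr_mul x sr_one = x;
  sr_mulDl : forall x y z, sr_mul (sr_add x y) z = sr_add (sr_mul x z) (sr_mul y z);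
  sr_mulDr : forall x y z, sr_mul x (sr_add y z) = sr_add (sr_mul x y) (sr_mul x z)
}.

Section SemiringDMatrices.
Variable R : comSemiringD.

(* R with a formal zero adjoined (None = 0); only used so that empty sums
   (e.g. the zero polynomial) and empty products have a value.  All entries
   produced by evaluating nonconstant monomials at matrices over R are Some _. *)
Definition oadd (x y : option R) : option R :=
  match x, y with
  | None, _ => y
  | _, None => x
  | Some a, Some b => Some (sr_add a b)
  end.
Definition omul (x y : option R) : option R :=
  match x, y with
  | Some a, Some b => Some (sr_mul a b)
  | _, _ => None
  end.

Variable n : nat.
Definition smx := 'I_n -> 'I_n -> option R.
Definition smx0 : smx := fun _ _ => None.
Definition smx1 : smx := fun i j => if i == j then Some (sr_one R) else None.
Definition smxD (A B : smx) : smx := fun i j => oadd (A i j) (B i j).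
Definition smxM (A B : smx) : smx :=
  fun i j => foldr oadd None [seq omul (A i k) (B k j) | k <- enum 'I_n].

Variable m : nat.
Definition smx_word (X : 'I_m -> smx) (w : seq 'I_m) : smx :=
  foldr (fun i M => smxM (X i) M) smx1 w.
Definition smx_evalN (X : 'I_m -> smx) (ws : seq (seq 'I_m)) (c : seq 'I_m -> nat) : smx :=
  foldr (fun w M => iter (c w) (smxD (smx_word X w)) M) smx0 ws.
End SemiringDMatrices.

Definition smx_of (R : comSemiringD) (n m : nat) (r : 'I_m -> 'I_n -> 'I_n -> R)
  : 'I_m -> smx R n := fun k i j => Some (r k i j).

Definition pos_part (m : nat) (c : seq 'I_m -> int) (w : seq 'I_m) : nat :=
  if (0 <= c w)%R then absz (c w) else 0%N.
Definition neg_part (m : nat) (c : seq 'I_m -> int) (w : seq 'I_m) : nat :=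
  if (c w < 0)%R then absz (c w) else 0%N.

Definition int_eval (m n : nat) (A : 'I_m -> 'M[int]_n) (ws : seq (seq 'I_m))
  (c : seq 'I_m -> int) : 'M[int]_n :=
  (\sum_(w <- ws) ((\prod_(i <- w) A i) *~ c w))%R.

(* Main.v *)
Require Import Defs.
From mathcomp Require Import all_boot all_order all_algebra.
From HB Require Import structures.
From mathcomp Require Import mpoly.
Set Implicit Arguments. Unset Strict Implicit. Unset Printing Implicit Defensive.
Import GRing.Theory.

Local Open Scope ring_scope.
Lemma poly_int_vanish (q : {poly int}) : (forall t, q.[t] = 0) -> q = 0.
Proof.
move=> H; apply/eqP; apply/negPn/negP => nz.
suff : false by [].
have := @max_poly_roots _ q [seq (i%:Z) | i <- iota 0 (size q)] nz.
rewrite size_map size_iota ltnn; apply.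
  by apply/allP => x _; apply/rootP/H.
rewrite map_inj_uniq ?iota_uniq // => a b; by case.
Qed.

Definition ext (k : nat) (v : 'I_k -> int) (t : int) (i : 'I_k.+1) : int :=
  oapp v t (insub (val i)).

Lemma ext_widen k v t (j : 'I_k) : ext v t (widen_ord (leqnSn k) j) = v j.
Proof. by rewrite /ext insubT //= => ?; congr v; apply: val_inj. Qed.

Lemma ext_max k v t : ext v t (@ord_max k) = t.
Proof. by rewrite /ext insubN //= ltnn. Qed.

Lemma muni_coef k (p : {mpoly int[k.+1]}) (m : 'X_{1..k.+1}) :
  ((muni p)`_(m ord_max))@_[multinom m (widen_ord (leqnSn k) i) | i < k] = p@_m.
Proof.
rewrite muniE coef_sumMXn raddf_sum /=.
under eq_bigr => x _ do rewrite mcoeffZ mcoeffX.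
have E : forall x : 'X_{1..k.+1},
  ((x ord_max == m ord_max) &&
   ([multinom x (widen_ord (leqnSn k) i) | i < k] ==
    [multinom m (widen_ord (leqnSn k) i) | i < k])) = (x == m).
  move=> x; apply/idP/idP; last by move/eqP->; rewrite !eqxx.
  case/andP => /eqP e1 /eqP e2; apply/eqP/mnmP => i.
  have [j ->|->] := unliftP ord_max i; last by [].
  have := congr1 (fun mm : 'X_{1..k} => mm j) e2; rewrite !mnmE.
  have -> : lift ord_max j = widen_ord (leqnSn k) j by apply: val_inj; rewrite /= /bump leqNgt ltn_ord.
  by [].
rewrite big_mkcond /=.
transitivity (\sum_(x <- msupp p) p@_x * (x == m)%:R).
  apply: eq_bigr => x _; rewrite -E.
  by case: (x ord_max == m ord_max); rewrite /= ?mulr0.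
under eq_bigr => x _ do rewrite mulr_natr mulrb.
rewrite -big_mkcond /=.
case: (boolP (m \in msupp p)) => Hm.
  by rewrite -big_filter filter_pred1_uniq ?msupp_uniq // big_seq1.
rewrite (memN_msupp_eq0 Hm) big_seq_cond big_pred0 // => x.
by apply/andP => -[xin /eqP xm]; move: Hm; rewrite -xm xin.
Qed.

Lemma muni_eval k (p : {mpoly int[k.+1]}) v t :
  p.@[ext v t] = (map_poly (meval v) (muni p)).[t].
Proof.
rewrite mevalE muniE raddf_sum horner_sum /=.
apply: eq_bigr => m _.
rewrite map_polyZ /= map_polyXn hornerZ hornerXn mevalZ mevalX big_ord_recr /= ext_max.
rewrite mulrA; congr (_ * _ * _).
by apply: eq_bigr => i _; rewrite mnmE ext_widen.
Qed.

Lemma mpoly_int_vanish_ext k (p : {mpoly int[k]}) :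
  (forall v, p.@[v] = 0) -> p = 0.
Proof.
elim: k p => [|k IH] p H.
  rewrite (nvar0_mpolyC p); have := H (fun _ => 0).
  by rewrite {1}(nvar0_mpolyC p) mevalC => ->.
apply/mpolyP => m; rewrite mcoeff0 -muni_coef.
suff -> : (muni p)`_(m ord_max) = 0 by rewrite mcoeff0.
apply: IH => v.
have : map_poly (meval v) (muni p) = 0.
  by apply: poly_int_vanish => t; rewrite -muni_eval H.
by move=> E; have := congr1 (fun q : {poly int} => q`_(m ord_max)) E; rewrite coef_map coef0.
Qed.

Local Close Scope ring_scope.
Section Paths.
Variables (m n : nat).
Definition V := ('I_m * 'I_n * 'I_n)%type.

Fixpoint paths (w : seq 'I_m) (a b : 'I_n) : seq (seq V) :=
  match w with
  | [::] => if a == b then [:: [::]] else [::]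
  | k :: w' => flatten [seq [seq (k, a, c) :: p | p <- paths w' c b] | c <- enum 'I_n]
  end.

Local Open Scope ring_scope.

Lemma int_paths (A : 'I_m -> 'M[int]_n) w a b :
  (\prod_(i <- w) A i) a b =
  \sum_(p <- paths w a b) \prod_(v <- p) A v.1.1 v.1.2 v.2.
Proof.
elim: w a b => [|k w IH] a b /=.
  rewrite big_nil mxE; case: (a == b); by rewrite ?big_seq1 ?big_nil.
rewrite big_cons mxE big_flatten big_map /= big_enum /=.
apply: eq_bigr => c _; rewrite IH mulr_sumr big_map.
by apply: eq_bigr => p _; rewrite big_cons.
Qed.

Lemma mxMz (A : 'M[int]_n) i j z : (A *~ z) i j = A i j *~ z.
Proof.
have h k : (A *+ k) i j = A i j *+ k.
  by elim: k => [|k IH]; rewrite ?mulr0n ?mxE // !mulrS mxE IH.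
by case: z => k; rewrite ?NegzE ?mulrNz ?h // mxE h.
Qed.

Definition K := #|{: V}|.
Definition mon (p : seq V) : 'X_{1..K} := (\sum_(v <- p) U_(enum_rank v))%MM.

Lemma meval_mon (a : 'I_K -> int) p :
  ('X_[mon p] : {mpoly int[K]}).@[a] = \prod_(v <- p) a (enum_rank v).
Proof.
elim: p => [|v p IH]; first by rewrite /mon !big_nil mpolyX0 meval1.
by rewrite /mon !big_cons mpolyXD mevalM -/(mon p) IH mevalXU.
Qed.

Lemma sum_ind (T : Type) (P : pred T) (s : seq T) :
  \sum_(x <- s) ((P x)%:R : int) = (count P s)%:R.
Proof.
elim: s => [|x s IH]; first by rewrite big_nil.
by rewrite big_cons IH /= natrD.
Qed.

Lemma int_coef_identity (ws : seq (seq 'I_m)) (c : seq 'I_m -> int) :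
  (forall A : 'I_m -> 'M[int]_n, int_eval A ws c = 0) ->
  forall (i j : 'I_n) (mu : 'X_{1..K}),
  \sum_(w <- ws) ((count (fun p => mon p == mu) (paths w i j))%:R : int) * c w = 0.
Proof.
move=> H i j mu.
pose Q : {mpoly int[K]} :=
  \sum_(w <- ws) (\sum_(p <- paths w i j) 'X_[mon p]) *~ c w.
have Q0 : Q = 0.
  apply: mpoly_int_vanish_ext => a.
  pose A k : 'M[int]_n := \matrix_(x, y) a (enum_rank (k, x, y)).
  have := congr1 (fun M : 'M[int]_n => M i j) (H A).
  rewrite /int_eval summxE mxE => E; rewrite -E /Q raddf_sum /=.
  apply: eq_bigr => w _; rewrite raddfMz raddf_sum mxMz int_paths /=.
  congr (_ *~ _); apply: eq_bigr => p _; rewrite meval_mon.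
  by apply: eq_bigr => v _; rewrite mxE; case: v => [[]].
transitivity (Q@_mu); last by rewrite Q0 mcoeff0.
rewrite /Q raddf_sum /=.
apply: eq_bigr => w _; rewrite raddfMz raddf_sum /=.
under eq_bigr => p _ do rewrite mcoeffX.
by rewrite sum_ind -mulrzr intz.
Qed.
End Paths.
Section SR.
Variable R : comSemiringD.

Lemma oaddA : associative (@oadd R).
Proof. by case=> [x|] [y|] [z|] //=; rewrite sr_addA. Qed.
Lemma oaddC : commutative (@oadd R).
Proof. by case=> [x|] [y|] //=; rewrite sr_addC. Qed.
Lemma oadd0 : left_id None (@oadd R).
Proof. by case. Qed.

HB.instance Definition _ := Monoid.isComLaw.Build (option R) None (@oadd R) oaddA oaddC oadd0.

Lemma smulA : associative (@sr_mul R).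
Proof. exact: sr_mulA. Qed.
HB.instance Definition _ := Monoid.isComLaw.Build R (sr_one R) (@sr_mul R) smulA (@sr_mulC R) (@sr_mul1l R).

Lemma omul_big (I : Type) (s : seq I) (F : I -> option R) x :
  omul (Some x) (\big[@oadd R/None]_(i <- s) F i) = \big[@oadd R/None]_(i <- s) omul (Some x) (F i).
Proof.
elim: s => [|y s IH]; first by rewrite !big_nil.
rewrite !big_cons -IH; case: (F y) => [a|]; case: (\big[_/_]_(i <- s) F i) => [b|] //=.
by rewrite sr_mulDr.
Qed.

Lemma foldr_big (s : seq (option R)) : foldr (@oadd R) None s = \big[@oadd R/None]_(x <- s) x.
Proof. by elim: s => [|x s IH]; rewrite ?big_nil ?big_cons //= IH. Qed.

Variables (m n : nat) (r : 'I_m -> 'I_n -> 'I_n -> R).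

Definition sprod (p : seq (V m n)) := \big[@sr_mul R/sr_one R]_(v <- p) r v.1.1 v.1.2 v.2.

Lemma word_paths w a b :
  smx_word (smx_of r) w a b = \big[@oadd R/None]_(p <- paths w a b) Some (sprod p).
Proof.
elim: w a b => [|k w IH] a b /=.
  rewrite /smx1; case: (a == b); first by rewrite big_seq1 /sprod big_nil.
  by rewrite big_nil.
rewrite /smxM foldr_big big_map [RHS]big_flatten [RHS]big_map.
apply: eq_bigr => cc _; rewrite IH /smx_of omul_big big_map.
by apply: eq_bigr => p _; rewrite /sprod big_cons.
Qed.

Lemma iter_smxD (W M : smx R n) a b (L : seq (seq (V m n))) k :
  W a b = \big[@oadd R/None]_(p <- L) Some (sprod p) ->
  iter k (smxD W) M a b =
  oadd (\big[@oadd R/None]_(p <- flatten (nseq k L)) Some (sprod p)) (M a b).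
Proof.
move=> HW; elim: k => [|k IH] /=; first by rewrite big_nil.
by rewrite /smxD IH big_cat HW oaddA.
Qed.

Lemma evalN_paths ws cc a b :
  smx_evalN (smx_of r) ws cc a b =
  \big[@oadd R/None]_(p <- flatten [seq flatten (nseq (cc w) (paths w a b)) | w <- ws])
     Some (sprod p).
Proof.
elim: ws => [|w ws IH] /=; first by rewrite big_nil.
rewrite (iter_smxD _ _ (word_paths w a b)) big_cat.
by rewrite IH.
Qed.

Definition seq_of (mu : 'X_{1..K m n}) : seq (V m n) :=
  flatten [seq nseq (mu (enum_rank v)) v | v <- enum {: V m n}].

Lemma count_seq_of mu x : count_mem x (seq_of mu) = mu (enum_rank x).
Proof.
rewrite count_flatten -map_comp sumnE big_map big_enum /=.
under eq_bigr => v _ do rewrite count_nseq /=.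
rewrite (bigD1 x) //= eqxx mul1n big1 ?addn0 // => v /negbTE.
by rewrite eq_sym => ->.
Qed.

Lemma count_mon x (p : seq (V m n)) : count_mem x p = mon p (enum_rank x).
Proof.
elim: p => [|v p IH]; first by rewrite /mon big_nil mnm0E.
by rewrite /mon big_cons mnmDE mnm1E -/(mon p) -IH (inj_eq enum_rank_inj).
Qed.

Lemma sprod_mon p : sprod p = sprod (seq_of (mon p)).
Proof.
apply: perm_big; apply/allP => x _; apply/eqP.
by rewrite count_seq_of count_mon.
Qed.
End SR.

Lemma pos_neg (m : nat) (c : seq 'I_m -> int) w :
  ((pos_part c w)%:Z - (neg_part c w)%:Z)%R = c w.
Proof.
rewrite /pos_part /neg_part; case: (c w) => k //=.
  by rewrite GRing.subr0.
by rewrite NegzE GRing.add0r.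
Qed.

Theorem corollary5p5 (m n : nat) (ws : seq (seq 'I_m)) (c : seq 'I_m -> int) :
  uniq ws ->
  (forall A : 'I_m -> 'M[int]_n, int_eval A ws c = 0%R) ->
  forall (R : comSemiringD) (r : 'I_m -> 'I_n -> 'I_n -> R) (i j : 'I_n),
    smx_evalN (smx_of r) ws (pos_part c) i j = smx_evalN (smx_of r) ws (neg_part c) i j.
Proof.
move=> _ H R r i j; rewrite !evalN_paths.
set Lf := flatten _; set Lg := flatten _.
have E (L : seq (seq (V m n))) :
  \big[@oadd R/None]_(p <- L) Some (sprod r p) =
  \big[@oadd R/None]_(mu <- map (@mon m n) L) Some (sprod r (seq_of mu)).
  by rewrite big_map; apply: eq_bigr => p _; rewrite -sprod_mon.
rewrite !E; apply: perm_big; apply/allP => mu _; apply/eqP.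
rewrite !count_map /Lf /Lg !count_flatten -!map_comp !sumnE !big_map.
have hc k (L : seq (seq (V m n))) :
  count (fun p => mon p == mu) (flatten (nseq k L)) = (count (fun p => mon p == mu) L * k)%N.
  by rewrite count_flatten map_nseq sumn_nseq.
under eq_bigr => w _ do rewrite /= hc.
under [RHS]eq_bigr => w _ do rewrite /= hc.
apply/eqP; rewrite -eqz_nat -GRing.subr_eq0 -!natz !natr_sum -GRing.sumrB.
apply/eqP; rewrite -[RHS](int_coef_identity H i j mu); apply: eq_bigr => w _.
by rewrite !natrM -mulrBr !natz pos_neg.
Qed.
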